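(* Let $C$ be an extended ADE curve, $\chi>0$ an integer, and $H$ an ample line bundle on $C$ with $\sum_{o\in O}b_o=\chi+|O|-1$. Then: (i) $b_i=1$ for every $i\in I$. (ii) Let $J\subset O$ and let $f$ be a number with $0\le f\le e_I:=\sum_{i\in I}m_ie_i$, and assume that $J\subsetneq O$ or $f<e_I$. Then \[1-|J|+\sum_{j\in J}b_j>\frac{f+\sum_{j\in J}e_j}{e}\,\chi.\]
   Context: Work over $\mathbb C$. Let $X$ be a smooth projective surface and $C=\sum_{v\in V}m_vC_v\subset X$ an effective divisor with smooth irreducible components $C_v$, at most two through any point, meeting transversally. The labelled intersection graph $\Gamma$ has vertex set $V$, one edge per intersection point, label $m_v$. $C$ is an \emph{extended ADE curve} if (1) $\Gamma$ is one of: $\tilde A_n$: a cycle of $n+1$ vertices (two vertices, two edges if $n=1$), all labels $1$; $\tilde D_n$ ($n\ge4$): a chain of $n-3$ label-$2$ vertices with two label-$1$ vertices attached to each end (for $n=4$, one label-$2$ vertex with four label-$1$ neighbours); $\tilde E_6$: central label-$3$ vertex with three arms (label $2$ then $1$); $\tilde E_7$: chain $1,2,3,4,3,2,1$ plus a label-$2$ vertex on the label-$4$ vertex; $\tilde E_8$: chain $2,4,6,5,4,3,2,1$ plus a label-$3$ vertex on the label-$6$ vertex; (2) each $C_i$ with $m_i\ge2$ is a smooth rational $(-2)$-curve. $O$ = vertices of label $1$, $I=V\setminus O$. $e_v=\deg(H|_{C_v})$, $e=\sum_vm_ve_v$, $b_v=\lceil e_v\chi/e\rceil$. *)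

(* Defs.v *)
From HB Require Import structures.
From mathcomp Require Import all_boot all_order all_algebra.
Set Implicit Arguments. Unset Strict Implicit. Unset Printing Implicit Defensive.
Import Order.TTheory GRing.Theory Num.Theory.

(* Types of extended ADE (affine Dynkin) labelled graphs.
   ADE_At n = \tilde A_n (n >= 1), ADE_Dt n = \tilde D_n (n >= 4). *)
Inductive ADEtype := ADE_At of nat | ADE_Dt of nat | ADE_E6 | ADE_E7 | ADE_E8.

Definition ADE_wf (T : ADEtype) : bool :=
  match T with
  | ADE_At n => 1 <= n
  | ADE_Dt n => 4 <= n
  | _ => true
  end.

Definition ADE_labels (T : ADEtype) : seq nat :=
  match T with
  | ADE_At n => nseq n.+1 1
  | ADE_Dt n => [:: 1; 1] ++ nseq (n - 3) 2 ++ [:: 1; 1]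
  | ADE_E6 => [:: 3; 2; 2; 2; 1; 1; 1]
  | ADE_E7 => [:: 1; 2; 3; 4; 3; 2; 1; 2]
  | ADE_E8 => [:: 2; 4; 6; 5; 4; 3; 2; 1; 3]
  end.

(* The edges of the graph (one per intersection point), for documentation;
   the numerical statement only depends on the labels. *)
Definition ADE_edges (T : ADEtype) : seq (nat * nat) :=
  match T with
  | ADE_At 1 => [:: (0, 1); (0, 1)]
  | ADE_At n => [seq (i, (i.+1 %% n.+1)) | i <- iota 0 n.+1]
  | ADE_Dt 4 => [:: (2, 0); (2, 1); (2, 3); (2, 4)]
  | ADE_Dt n => [:: (0, 2); (1, 2)] ++ [seq (i, i.+1) | i <- iota 2 (n - 4)]
                 ++ [:: (n - 2, n - 1); (n - 2, n)]
  | ADE_E6 => [:: (0, 1); (0, 2); (0, 3); (1, 4); (2, 5); (3, 6)]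
  | ADE_E7 => [:: (0, 1); (1, 2); (2, 3); (3, 4); (4, 5); (5, 6); (3, 7)]
  | ADE_E8 => [:: (0, 1); (1, 2); (2, 3); (3, 4); (4, 5); (5, 6); (6, 7); (2, 8)]
  end.

Definition ADEvert (T : ADEtype) := 'I_(size (ADE_labels T)).

Definition mlab (T : ADEtype) (v : ADEvert T) : nat := nth 0 (ADE_labels T) v.

Definition Overt (T : ADEtype) : {set ADEvert T} := [set v | mlab v == 1].
Definition Ivert (T : ADEtype) : {set ADEvert T} := ~: Overt T.

Definition etot (T : ADEtype) (e : ADEvert T -> nat) : nat :=
  \sum_(v : ADEvert T) mlab v * e v.

Definition eI (T : ADEtype) (e : ADEvert T -> nat) : nat :=
  \sum_(i in Ivert T) mlab i * e i.

Definition bval (T : ADEtype) (e : ADEvert T -> nat) (chi : nat) (v : ADEvert T) : int :=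
  Num.ceil (((e v * chi)%:R : rat) / (etot e)%:R).

(* Main.v *)
Require Import Defs.
From HB Require Import structures.
From mathcomp Require Import all_boot all_order all_algebra zify ring lra.
Import Order.TTheory GRing.Theory Num.Theory.
Set Implicit Arguments. Unset Strict Implicit.
Local Open Scope ring_scope.

Lemma labels_pos T : all (leq 1) (ADE_labels T).
Proof. case: T => [n|n|||] //=; rewrite ?all_cat ?all_nseq ?orbT //. Qed.

Lemma mlab_pos T (v : ADEvert T) : (0 < mlab v)%N.
Proof. by apply: (all_nthP 0 (labels_pos T)); case: v. Qed.

Lemma Overt_n0 T : exists o, o \in Overt T.
Proof.
have H1 : 1%N \in ADE_labels T.
  by case: T => [n|n|||] //=; rewrite mem_nseq.
have Hi : (index 1%N (ADE_labels T) < size (ADE_labels T))%N by rewrite index_mem.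
exists (Ordinal Hi); rewrite inE /mlab /= nth_index //.
Qed.

Lemma etot_pos T (e : ADEvert T -> nat) (He : forall v, (0 < e v)%N) : (0 < etot e)%N.
Proof.
have [o Ho] := Overt_n0 T.
rewrite /etot (bigD1 o) //=; have := He o; have := mlab_pos o; lia.
Qed.

Lemma bbound T (e : ADEvert T -> nat) (He : forall v, (0 < e v)%N) chi v :
  (bval e chi v - 1) * (etot e)%:Z + 1 <= (e v * chi)%:Z.
Proof.
have E0 := etot_pos He.
have := ceilB1_lt (((e v * chi)%:R : rat) / (etot e)%:R).
rewrite ltr_pdivlMr ?ltr0n // -/(bval e chi v).
rewrite -[(etot e)%:R]/((etot e)%:Z%:~R) -[((e v * chi)%N)%:R : rat]/(((e v * chi)%N)%:Z%:~R).
rewrite -intrM ltr_int => H.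
lia.
Qed.

Lemma sumbound T (e : ADEvert T -> nat) (He : forall v, (0 < e v)%N) chi (A : {set ADEvert T}) :
  (\sum_(v in A) bval e chi v - #|A|%:Z) * (etot e)%:Z + #|A|%:Z <= ((\sum_(v in A) e v) * chi)%N%:Z.
Proof.
have H : \sum_(v in A) ((bval e chi v - 1) * (etot e)%:Z + 1) <= \sum_(v in A) ((e v * chi)%N%:Z).
  by apply: ler_sum => v _; apply: bbound.
rewrite big_split /= -mulr_suml sumrB /= !sumr_const in H.
move: H; congr (_ <= _); last first.
  by rewrite big_distrl /= (big_morph Posz PoszD (erefl 0%Z)).
by rewrite natz.
Qed.

Lemma etot_split T (e : ADEvert T -> nat) :
  etot e = (\sum_(v in Overt T) e v + eI e)%N.
Proof.
rewrite /etot /eI (bigID (fun v => v \in Overt T)) /=.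
have -> : (\sum_(i in Overt T) mlab i * e i = \sum_(v in Overt T) e v)%N.
  by apply: eq_bigr => v; rewrite /Overt inE => /eqP ->; rewrite mul1n.
apply: congr1. apply: eq_bigl => v. by rewrite /Ivert in_setC.
Qed.

Lemma le_eI T (e : ADEvert T -> nat) i : i \in Ivert T -> (e i <= eI e)%N.
Proof.
move=> Hi; rewrite /eI (bigD1 i) //=; have := mlab_pos i; nia.
Qed.

Theorem lemma3p13 (R : realFieldType) (T : ADEtype) (HT : ADE_wf T)
  (e : ADEvert T -> nat) (He : forall v, (0 < e v)%N)
  (chi : nat) (Hchi : (0 < chi)%N)
  (Hsum : \sum_(o in Overt T) bval e chi o = (chi%:Z + #|Overt T|%:Z - 1)) :
  (forall i, i \in Ivert T -> bval e chi i = 1) /\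
  (forall (J : {set ADEvert T}) (f : R),
     J \subset Overt T -> 0 <= f -> f <= (eI e)%:R ->
     (J \proper Overt T \/ f < (eI e)%:R) ->
     (1 - (#|J|%:Z)%:~R + \sum_(j in J) (bval e chi j)%:~R : R)
       > (f + \sum_(j in J) (e j)%:R) / (etot e)%:R * chi%:R).
Proof.
have E0 := etot_pos He.
have Hsp := etot_split e.
have HO := sumbound He chi (Overt T).
rewrite Hsum in HO.
have key : (chi * eI e + #|Overt T| <= etot e)%N.
  move: HO; rewrite Hsp; nia.
split.
  move=> i Hi; apply: ceil_def; rewrite subrr.
  have := le_eI e Hi; have := He i => Hei HeI.
  apply/andP; split.
    by apply: divr_gt0; rewrite ltr0n // muln_gt0 Hei.
  rewrite ler_pdivrMr ?ltr0n // mul1r ler_nat; nia.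
move=> J f HJ f0 fI Hcase.
have HS := sumbound He chi (Overt T :\: J).
have Hb : \sum_(i in Overt T) bval e chi i = \sum_(i in J) bval e chi i + \sum_(i in Overt T :\: J) bval e chi i.
  by rewrite (big_setID J) (setIidPr HJ).
have He' : (\sum_(i in Overt T) e i = \sum_(i in J) e i + \sum_(i in Overt T :\: J) e i)%N.
  by rewrite (big_setID J) (setIidPr HJ).
have Hc := cardsID J (Overt T).
rewrite (setIidPr HJ) in Hc.
rewrite /= Hsum in Hb.
set SJ := \sum_(i in J) bval e chi i in Hb.
set SJc := \sum_(i in Overt T :\: J) bval e chi i in Hb HS.
set eJ := (\sum_(i in J) e i)%N in He'.
set eOc := (\sum_(i in Overt T :\: J) e i)%N in He' HS.
have kint : ((eI e + eJ) * chi + #|Overt T :\: J|)%:Z <= (1 - #|J|%:Z + SJ) * (etot e)%:Z.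
  move: HS; rewrite Hsp He'. nia.
have kR : (((eI e)%:R + eJ%:R) * chi%:R + (#|Overt T :\: J|)%:R : R)
    <= (1 - #|J|%:Z + SJ)%:~R * (etot e)%:R.
  move: kint; rewrite -(ler_int R); congr (_ <= _).
    by rewrite -natz mulrz_nat natrD !natrM natrD.
  by rewrite intrM -[Posz (etot e)]natz mulrz_nat.
have -> : (1 - (#|J|%:Z)%:~R + \sum_(j in J) (bval e chi j)%:~R : R) = (1 - #|J|%:Z + SJ)%:~R.
  by rewrite /SJ rmorphD rmorphB rmorph_sum /=.
rewrite -natr_sum -/eJ mulrAC ltr_pdivrMr ?ltr0n //.
apply: lt_le_trans kR.
have c0 : (0 : R) < chi%:R by rewrite ltr0n.
case: Hcase => [Hp|Hf].
  have : (0 < #|Overt T :\: J|)%N.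
    have := proper_card Hp; lia.
  rewrite -(ltr0n R) => Hn.
  have : (f + eJ%:R) * chi%:R <= ((eI e)%:R + eJ%:R) * chi%:R.
    by rewrite ler_wpM2r ?ler0n // lerD2r.
  lra.
have : (f + eJ%:R) * chi%:R < ((eI e)%:R + eJ%:R) * chi%:R.
  by rewrite ltr_pM2r // ltrD2r.
have := ler0n R #|Overt T :\: J|.
lra.
Qed.
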